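(* Let $\gamma<0$ and $\epsilon_{\text{abs}}>0$, and let $\hat g_{+,\gamma}\in\arg\min_{f\in\mathcal{F}}\hat h_{+,\gamma}(f)$. If $\hat h_{+,\gamma}(\hat g_{+,\gamma})\ge0$, then $$\left\{\frac{\hat h_{+,\gamma}(\hat g_{+,\gamma})}{\epsilon_{\text{abs}}}-1\right\}\gamma^{-1}\ge\widehat{MR}(f)$$ for all $f\in\mathcal{F}$ with $\hat e_{\text{orig}}(f)\le\epsilon_{\text{abs}}$; moreover $\widehat{MR}(f)\le|\gamma^{-1}|$ for all $f\in\mathcal{F}$. Additionally, if $\hat h_{+,\gamma}(\hat g_{+,\gamma})\ge0$ and $\hat e_{\text{orig}}(\hat g_{+,\gamma})\le\epsilon_{\text{abs}}$ with at least one of these two inequalities holding with equality, then the displayed inequality holds with equality for $f=\hat g_{+,\gamma}$.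
   Context: Setting: $\mathcal{F}$ a set of prediction models, $L\ge0$ a loss, and a fixed observed sample $(\mathbf{y}_{[i]},\mathbf{X}_{1[i]},\mathbf{X}_{2[i]})$, $i=1,\dots,n$, $n\ge2$. $\hat e_{\text{orig}}(f)=\frac1n\sum_iL\{f,(\mathbf{y}_{[i]},\mathbf{X}_{1[i]},\mathbf{X}_{2[i]})\}$; $\hat e_{\text{switch}}(f)=\frac1{n(n-1)}\sum_i\sum_{j\ne i}L\{f,(\mathbf{y}_{[j]},\mathbf{X}_{1[i]},\mathbf{X}_{2[j]})\}$; $\widehat{MR}(f)=\hat e_{\text{switch}}(f)/\hat e_{\text{orig}}(f)$. For $\gamma\in\mathbb{R}$, $\hat h_{+,\gamma}(f):=\hat e_{\text{orig}}(f)+\gamma\hat e_{\text{switch}}(f)$. Standing assumptions: $\min_{f\in\mathcal{F}}\hat e_{\text{orig}}(f)>0$ and minimizers of $\hat h_{+,\gamma}$ over $\mathcal{F}$ exist. *)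

(* Defs.v *)
From mathcomp Require Import all_boot all_order all_algebra.
Set Implicit Arguments. Unset Strict Implicit. Unset Printing Implicit Defensive.
Import Order.TTheory GRing.Theory Num.Theory.
Local Open Scope ring_scope.

Section EmpiricalMR.
Variables (R : realFieldType) (M Y X1 X2 : Type) (n : nat).
Variable L : M -> Y * X1 * X2 -> R.
Variables (y : 'I_n -> Y) (x1 : 'I_n -> X1) (x2 : 'I_n -> X2).

Definition e_orig (f : M) : R :=
  (n%:R)^-1 * \sum_(i < n) L f (y i, x1 i, x2 i).

Definition e_switch (f : M) : R :=
  ((n * n.-1)%:R)^-1 *
    \sum_(i < n) \sum_(j < n | j != i) L f (y j, x1 i, x2 j).

Definition MRhat (f : M) : R := e_switch f / e_orig f.

Definition h_plus (gamma : R) (f : M) : R := e_orig f + gamma * e_switch f.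
End EmpiricalMR.

(* Main.v *)
Require Import Defs.
From mathcomp Require Import all_boot all_order all_algebra ring lra.
Import Order.TTheory GRing.Theory Num.Theory.
Local Open Scope ring_scope.
Lemma key (R : realFieldType) (h eo es eps g : R) : g < 0 -> 0 < eo -> 0 <= h ->
  h <= eo + g * es -> eo <= eps -> 0 < eps -> es / eo <= (h / eps - 1) * g^-1.
Proof.
move=> g0 eo0 h0 H e1 e0.
rewrite ler_pdivrMr //.
have gn : g != 0 by rewrite lt_eqF.
rewrite -(ler_nM2l g0) mulrA mulrCA mulfV // mulr1.
have : h / eps * eo <= h.
  rewrite -mulrA; apply: ler_piMr => //.
  by rewrite ler_pdivrMl // mulr1.
lra.
Qed.
Lemma key2 (R : realFieldType) (h eo es g : R) : g < 0 -> 0 < eo -> 0 <= h ->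
  h <= eo + g * es -> es / eo <= `|g^-1|.
Proof.
move=> g0 eo0 h0 H.
rewrite ltr0_norm ?invr_lt0 //.
rewrite ler_pdivrMr //.
have gn : g != 0 by rewrite lt_eqF.
rewrite -(ler_nM2l g0) ?mulNr ?mulrN mulrA mulfV // mul1r.
apply: le_trans (_ : h - eo <= _); last by rewrite lerBlDl.
by rewrite -[X in X <= _]add0r lerD2r.
Qed.
Lemma key3 (R : realFieldType) (h eo es eps g : R) : g < 0 -> 0 < eo -> 0 < eps ->
  h = eo + g * es -> (h = 0 \/ eo = eps) -> es / eo = (h / eps - 1) * g^-1.
Proof.
move=> g0 eo0 e0 H [h0|<-].
  have gn : g != 0 by rewrite lt_eqF.
  have en : eo != 0 by rewrite gt_eqF.
  have : es = - eo / g.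
    apply: (mulfI gn). rewrite mulrCA mulfV // mulr1. rewrite h0 in H. by apply/eqP; rewrite -addr_eq0 addrC -H.
  move=> ->. rewrite h0. field. by rewrite ?gn ?en ?(gt_eqF e0).
have gn : g != 0 by rewrite lt_eqF.
have en : eo != 0 by rewrite gt_eqF.
rewrite H. field. by rewrite ?gn ?en ?(gt_eqF e0).
Qed.
Theorem lemma19 (R : realFieldType) (M Y X1 X2 : Type) (n : nat)
  (F : M -> Prop) (L : M -> Y * X1 * X2 -> R)
  (y : 'I_n -> Y) (x1 : 'I_n -> X1) (x2 : 'I_n -> X2)
  (Hn : (2 <= n)%N)
  (HL : forall f o, 0 <= L f o)
  (Hmin_orig : exists2 f0, F f0 /\ (forall f, F f -> e_orig L y x1 x2 f0 <= e_orig L y x1 x2 f)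
                          & 0 < e_orig L y x1 x2 f0)
  (gamma eps : R) (Hgamma : gamma < 0) (Heps : 0 < eps)
  (g : M) (HgF : F g)
  (Hg : forall f, F f -> h_plus L y x1 x2 gamma g <= h_plus L y x1 x2 gamma f) :
  (0 <= h_plus L y x1 x2 gamma g ->
     (forall f, F f -> e_orig L y x1 x2 f <= eps ->
        MRhat L y x1 x2 f <= (h_plus L y x1 x2 gamma g / eps - 1) * gamma^-1)
     /\ (forall f, F f -> MRhat L y x1 x2 f <= `|gamma^-1|))
  /\
  (0 <= h_plus L y x1 x2 gamma g -> e_orig L y x1 x2 g <= eps ->
     (h_plus L y x1 x2 gamma g = 0 \/ e_orig L y x1 x2 g = eps) ->
     MRhat L y x1 x2 g = (h_plus L y x1 x2 gamma g / eps - 1) * gamma^-1).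
Proof.
case: Hmin_orig => f0 [Hf0 Hmin] Hpos.
have eop : forall f, F f -> 0 < e_orig L y x1 x2 f.
  by move=> f Ff; exact: lt_le_trans Hpos (Hmin f Ff).
split.
  move=> h0; split.
    move=> f Ff He; apply: key => //; first exact: eop.
    exact: Hg.
  move=> f Ff; apply: (@key2 _ (h_plus L y x1 x2 gamma g)) => //; first exact: eop.
  exact: Hg.
move=> h0 He Hor; apply: key3 => //; first exact: eop.
Qed.
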